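(* Fix $k\in[n]$ and arbitrary negotiating positions $\mu_i'\in\mathbb{R}^n$ for all $i\neq k$. For $\mu_k'\in\mathbb{R}^n$, let $M'$ be the matrix with columns $\mu_1',\dots,\mu_n'$ and $(W',P')$ the stable point for $M'$. Then the map $\mu_k'\mapsto g_k(W',P')$ is a quadratic function of $\mu_k'$ whose Hessian is negative definite.
   Context: Fix agents $[n]=\{1,\dots,n\}$. Let $\Sigma\in\mathbb{R}^{n\times n}$ be symmetric positive definite, $\Gamma=\mathrm{diag}(\gamma_1,\dots,\gamma_n)$ with all $\gamma_i>0$, and let $M\in\mathbb{R}^{n\times n}$ be the matrix of true beliefs with $i$-th column $\mu_i=Me_i$. For a matrix of reported negotiating positions $M'\in\mathbb{R}^{n\times n}$, the stable point for $M'$ is the unique pair $(W,P)$ of real $n\times n$ matrices with $W=W^T$, $P^T=-P$ and $M'-P=2\Sigma W\Gamma$; equivalently $\mathrm{vec}(W)=\tfrac12(\Gamma\otimes\Sigma+\Sigma\otimes\Gamma)^{-1}\mathrm{vec}(M'+M'^T)$ and $P=M'-2\Sigma W\Gamma$. Here $\mathrm{vec}$ stacks columns and $e_i$ is the $i$-th standard basis vector. Agent $i$'s (true) utility at $(W,P)$ is $g_i(W,P)=w_i^T(\mu_i-Pe_i)-\gamma_i\, w_i^T\Sigma w_i$, where $w_i=We_i$. *)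

(* Defs.v *)
From HB Require Import structures.
From mathcomp Require Import all_boot all_order all_algebra.
Set Implicit Arguments. Unset Strict Implicit. Unset Printing Implicit Defensive.
Import Order.TTheory GRing.Theory Num.Theory.
Local Open Scope ring_scope.

Section Defs.
Variables (R : realFieldType) (n : nat).

Definition spd (S : 'M[R]_n) : Prop :=
  S^T = S /\ forall v : 'cV[R]_n, v != 0 -> 0 < (v^T *m S *m v) 0 0.

Definition Gam (gamma : 'I_n -> R) : 'M[R]_n := diag_mx (\row_i gamma i).

(* The linear operator W |-> Sigma W Gamma + Gamma W Sigma, whose matrix
   (in mathcomp's row-vector mxvec convention) is Gamma (x) Sigma + Sigma (x) Gamma. *)
Definition stabOp (S : 'M[R]_n) (gamma : 'I_n -> R) (W : 'M[R]_n) : 'M[R]_n :=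
  S *m W *m Gam gamma + Gam gamma *m W *m S.

Definition stableW (S : 'M[R]_n) (gamma : 'I_n -> R) (M' : 'M[R]_n) : 'M[R]_n :=
  vec_mx (mxvec ((2%:R)^-1 *: (M' + M'^T)) *m invmx (lin_mx (stabOp S gamma))).

Definition stableP (S : 'M[R]_n) (gamma : 'I_n -> R) (M' : 'M[R]_n) : 'M[R]_n :=
  M' - 2%:R *: (S *m stableW S gamma M' *m Gam gamma).

Definition utility (S : 'M[R]_n) (gamma : 'I_n -> R) (M : 'M[R]_n) (i : 'I_n)
    (W P : 'M[R]_n) : R :=
  ((col i W)^T *m (col i M - col i P)) 0 0
  - gamma i * ((col i W)^T *m S *m col i W) 0 0.

Definition replace_col (Mo : 'M[R]_n) (k : 'I_n) (x : 'cV[R]_n) : 'M[R]_n :=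
  \matrix_(i, j) (if j == k then x i 0 else Mo i j).

End Defs.

(* Main.v *)
Require Import Defs.
From HB Require Import structures.
From mathcomp Require Import all_boot all_order all_algebra.
From mathcomp Require Import ring lra.
Set Implicit Arguments. Unset Strict Implicit. Unset Printing Implicit Defensive.
Import Order.TTheory GRing.Theory Num.Theory.
Local Open Scope ring_scope.

Lemma stableW_lin (R : realFieldType) (n : nat) (S : 'M[R]_n) (g : 'I_n -> R) a M N :
  stableW S g (a *: M + N) = a *: stableW S g M + stableW S g N.
Proof.
rewrite /stableW -linearZ -linearD; congr vec_mx.
rewrite scalemxAl -mulmxDl; congr (_ *m _).
rewrite -linearZ -linearD; congr mxvec.
by apply/matrixP=> i j; rewrite !mxE; ring. Qed.

Lemma stabOp_linear (R : realFieldType) (n : nat) (S : 'M[R]_n) (g : 'I_n -> R) :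
  linear (stabOp S g).
Proof.
move=> a W V; rewrite /stabOp !(mulmxDr, mulmxDl) -!scalemxAr -!scalemxAl scalerDr.
by rewrite !addrA; congr (_ + _); rewrite -!addrA; congr (_ + _); rewrite addrC.
Qed.
HB.instance Definition _ (R : realFieldType) (n : nat) (S : 'M[R]_n) (g : 'I_n -> R) :=
  GRing.isLinear.Build R 'M[R]_n 'M[R]_n *:%R (stabOp S g) (@stabOp_linear R n S g).

Definition fk (R : realFieldType) (n : nat) (S : 'M[R]_n) (g : 'I_n -> R) (k : 'I_n)
  (r : 'rV[R]_n) : 'rV[R]_n :=
  (stableW S g (r^T *m delta_mx 0 k) *m delta_mx k 0)^T.

Lemma fk_linear (R : realFieldType) (n : nat) (S : 'M[R]_n) (g : 'I_n -> R) k :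
  linear (fk S g k).
Proof.
move=> a r s; rewrite /fk.
have -> : (a *: r + s)^T *m delta_mx 0 k = a *: (r^T *m delta_mx 0 k) + s^T *m delta_mx 0 k.
  by rewrite linearD linearZ /= mulmxDl -scalemxAl.
by rewrite stableW_lin mulmxDl -scalemxAl linearD linearZ.
Qed.

HB.instance Definition _ (R : realFieldType) (n : nat) (S : 'M[R]_n) (g : 'I_n -> R) k :=
  GRing.isLinear.Build R 'rV[R]_n 'rV[R]_n *:%R (fk S g k) (@fk_linear R n S g k).

Definition dot (R : realFieldType) (n : nat) (p r : 'cV[R]_n) := (p^T *m r) 0 0.

Section Dot.
Variables (R : realFieldType) (n : nat).
Implicit Types (p r s : 'cV[R]_n) (Q : 'M[R]_n).
Lemma dotDl p s r : dot (p + s) r = dot p r + dot s r.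
Proof. by rewrite /dot linearD mulmxDl mxE. Qed.
Lemma dotDr p s r : dot r (p + s) = dot r p + dot r s.
Proof. by rewrite /dot mulmxDr mxE. Qed.
Lemma dotZl a p r : dot (a *: p) r = a * dot p r.
Proof. by rewrite /dot linearZ /= -scalemxAl mxE. Qed.
Lemma dotZr a p r : dot r (a *: p) = a * dot r p.
Proof. by rewrite /dot -scalemxAr mxE. Qed.
Lemma dotNl p r : dot (- p) r = - dot p r.
Proof. by rewrite -scaleN1r dotZl mulN1r. Qed.
Lemma dotNr p r : dot r (- p) = - dot r p.
Proof. by rewrite -scaleN1r dotZr mulN1r. Qed.
Lemma dotBl p s r : dot (p - s) r = dot p r - dot s r.
Proof. by rewrite dotDl dotNl. Qed.
Lemma dotBr p s r : dot r (p - s) = dot r p - dot r s.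
Proof. by rewrite dotDr dotNr. Qed.
Lemma dotC p r : dot p r = dot r p.
Proof.
by rewrite /dot -[in LHS](trmxK (p^T *m r)) trmx_mul trmxK [in LHS]mxE.
Qed.
Lemma dot_mulr p Q r : dot p (Q *m r) = dot (Q^T *m p) r.
Proof. by rewrite /dot trmx_mul trmxK mulmxA. Qed.
End Dot.

Lemma dotE (R : realFieldType) (n : nat) (p r : 'cV[R]_n) : (p^T *m r) 0 0 = dot p r.
Proof. by []. Qed.

Section Main.
Variables (R : realFieldType) (n : nat) (S : 'M[R]_n) (g : 'I_n -> R).
Hypothesis HS : spd S.
Hypothesis Hg : forall i, 0 < g i.

Local Notation G := (Gam g).
Local Notation op := (stabOp S g).

Lemma GT : G^T = G. Proof. by rewrite /Gam tr_diag_mx. Qed.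
Lemma ST : S^T = S. Proof. by case: HS. Qed.

Lemma mulG (A : 'M[R]_n) i j : (A *m G) i j = A i j * g j.
Proof. by rewrite /Gam mul_mx_diag !mxE. Qed.

Definition q (W : 'M[R]_n) j := ((col j W)^T *m S *m col j W) 0 0.
Definition T (W : 'M[R]_n) := \tr (W^T *m S *m W *m G).

Lemma q_ge0 W j : 0 <= q W j.
Proof.
rewrite /q; have [->|nz] := eqVneq (col j W) 0.
  by rewrite mulmx0 mxE.
by apply: ltW; case: HS => _ /(_ _ nz).
Qed.

Lemma q_gt0 W j : col j W != 0 -> 0 < q W j.
Proof. by move=> nz; case: HS => _ /(_ _ nz). Qed.

Lemma TE W : T W = \sum_j g j * q W j.
Proof.
rewrite /T /mxtrace; apply: eq_bigr => j _; rewrite mulG mulrC; congr (_ * _).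
rewrite /q !mxE; apply: eq_bigr => l _; rewrite !mxE; congr (_ * _).
by apply: eq_bigr => m _; rewrite !mxE.
Qed.

Lemma T_ge0 W : 0 <= T W.
Proof. by rewrite TE; apply: sumr_ge0 => j _; apply: mulr_ge0; [apply: ltW|apply: q_ge0]. Qed.

Lemma T_ge_k W k : g k * q W k <= T W.
Proof.
rewrite TE (bigD1 k) //=; rewrite lerDl; apply: sumr_ge0 => j _.
by apply: mulr_ge0; [apply: ltW|apply: q_ge0].
Qed.

Lemma T_gt0 W : W != 0 -> 0 < T W.
Proof.
move=> nz.
have [j cj] : exists j, col j W != 0.
  apply/existsP; apply: contraNT nz; rewrite negb_exists => /forallP H.
  apply/eqP/matrixP => i j; have := H j; rewrite negbK => /eqP/matrixP/(_ i 0).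
  by rewrite !mxE.
have h1 := T_ge_k W j; have h2 : 0 < g j * q W j by apply: mulr_gt0; [apply: Hg|apply: q_gt0].
exact: lt_le_trans h2 h1.
Qed.

Lemma frob_op W : \tr (W^T *m op W) = T W + T W^T.
Proof.
rewrite /stabOp mulmxDr mxtraceD /T !mulmxA trmxK; congr (_ + _).
rewrite mxtrace_mulC !mulmxA.
by rewrite mxtrace_mulC !mulmxA.
Qed.

Lemma op_inj W : op W = 0 -> W = 0.
Proof.
move=> h; apply/eqP; apply: contraT => nz.
have := frob_op W; rewrite h mulmx0 linear0.
have h1 := T_gt0 nz; have h2 := T_ge0 W^T.
move=> e; move: h1 h2; rewrite -[T W]addr0 => h1 h2.
have : 0 < T W + T W^T by apply: lt_le_trans h1 _; rewrite lerD2l.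
by rewrite -e ltxx.
Qed.

Lemma unitL : lin_mx op \in unitmx.
Proof.
rewrite unitmxE unitfE; apply/negP => /det0P [v nz vL].
have : op (vec_mx v) = 0.
  apply: (can_inj mxvecK); rewrite -(mul_vec_lin (stabOp S g)) vec_mxK vL.
  by rewrite linear0.
move/op_inj => h; move: nz; rewrite -[v]vec_mxK h linear0 eqxx.
by [].
Qed.

Lemma stableW_op M' : op (stableW S g M') = 2^-1 *: (M' + M'^T).
Proof.
apply: (can_inj mxvecK); rewrite -(mul_vec_lin (stabOp S g)) /stableW vec_mxK mulmxKV //.
exact: unitL.
Qed.

Lemma op_tr W : op W^T = (op W)^T.
Proof.
rewrite /stabOp linearD /= !trmx_mul GT ST !mulmxA addrC.
by [].
Qed.

Lemma stableW_sym M' : (stableW S g M')^T = stableW S g M'.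
Proof.
apply/eqP; rewrite -subr_eq0; apply/eqP; apply: op_inj.
rewrite linearB /= op_tr stableW_op linearZ /= linearD /= trmxK addrC.
by rewrite [M'^T + M']addrC addNr.
Qed.

Lemma Ge k : G *m (delta_mx k 0 : 'cV[R]_n) = g k *: delta_mx k 0.
Proof.
apply/matrixP => i j; rewrite /Gam mul_diag_mx !mxE.
by case: (eqVneq i k) => [->|ne]; rewrite ?eqxx ?mulr1 ?mulr0 //= ?andbF ?mulr0.
Qed.

Lemma colx Mo k (x : 'cV[R]_n) : replace_col Mo k x *m delta_mx k 0 = x.
Proof. by rewrite -colE; apply/matrixP => i j; rewrite !mxE eqxx (ord1 j). Qed.

Lemma ME Mo k (x : 'cV[R]_n) :
  replace_col Mo k x = x *m delta_mx 0 k + replace_col Mo k 0.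
Proof.
apply/matrixP=> i j; rewrite !mxE big_ord1 !mxE eqxx /=.
by case: (j == k); rewrite ?mulr1 ?mulr0 ?addr0 ?add0r.
Qed.

Theorem main_sec (M Mo : 'M[R]_n) (k : 'I_n) :
  exists (A : 'M[R]_n) (b : 'cV[R]_n) (c : R),
    [/\ A^T = A,
        (forall v : 'cV[R]_n, v != 0 -> (v^T *m A *m v) 0 0 < 0) &
        (forall x : 'cV[R]_n,
           let M' := replace_col Mo k x in
           utility S g M k (stableW S g M') (stableP S g M')
           = (x^T *m A *m x) 0 0 + (b^T *m x) 0 0 + c)].
Proof.
pose e : 'cV[R]_n := delta_mx k 0.
pose L := (lin1_mx (fk S g k))^T.
have LE : forall v, L *m v = stableW S g (v *m delta_mx 0 k) *m e.
  move=> v; rewrite /L -[v in LHS]trmxK -trmx_mul mul_rV_lin1 /fk !trmxK //.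
pose M0 := replace_col Mo k 0.
pose d := stableW S g M0 *m e.
pose mu := col k M.
have WE : forall x, stableW S g (replace_col Mo k x) *m e = L *m x + d.
  move=> x; rewrite ME -[_ *m delta_mx 0 k]scale1r stableW_lin scale1r mulmxDl LE //.
pose A := - (2^-1) *: (L + L^T) + g k *: (L^T *m S *m L).
exists A, (L^T *m mu - d + (2 * g k) *: (L^T *m (S *m d))),
  (dot d mu + g k * dot d (S *m d)).
split.
- rewrite /A linearD !linearZ /= linearD /= trmxK !trmx_mul trmxK ST mulmxA; congr (_ *: _ + _); exact: addrC.
- move=> v nz.
  pose V := v *m delta_mx 0 k.
  pose W1 := stableW S g V.
  have uE : L *m v = W1 *m e by rewrite LE.
  set u := L *m v in uE.
  have sym1 : W1^T = W1 by apply: stableW_sym.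
  have F2 : g k * dot u (S *m u) <= T W1.
    have -> : dot u (S *m u) = q W1 k by rewrite /q colE -mulmxA dotE uE.
    exact: T_ge_k.
  have F1 : dot u v = 2 * T W1.
    have := frob_op W1; rewrite sym1 stableW_op -/W1.
    rewrite -scalemxAr mxtraceZ mulmxDr mxtraceD.
    have t1 : \tr (W1 *m V) = dot u v.
      rewrite /V mulmxA mxtrace_mulC trace_mx11 uE /dot trmx_mul trmx_delta.
      by rewrite mulmxA sym1.
    have t2 : \tr (W1 *m V^T) = dot u v.
      by rewrite -t1 -[W1 in LHS]sym1 -trmx_mul mxtrace_tr mxtrace_mulC.
    rewrite t1 t2 => h; lra.
  have F3 : 0 < T W1.
    apply: T_gt0; apply: contra nz => /eqP h0.
    have := stableW_op V; rewrite -/W1 h0 linear0 => /esym/eqP.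
    rewrite scalemx_eq0 invr_eq0 pnatr_eq0 /= => /eqP X0.
    have Xik : forall i, v i 0 + (i == k)%:R * v k 0 = 0.
      move=> i; move/matrixP: X0 => /(_ i k); rewrite !mxE !big_ord1 !mxE !eqxx /=.
      by rewrite mulr1 mulrC.
    have vk : v k 0 = 0 by have := Xik k; rewrite eqxx mul1r; lra.
    apply/eqP/matrixP => i j; rewrite (ord1 j) mxE; have := Xik i; rewrite vk mulr0 addr0 //.
  rewrite -mulmxA dotE /A.
  rewrite !(mulmxDl, mulmxDr, mulmxBr, mulmxBl, mulNmx, mulmxN, dotDl, dotDr, dotBl, dotBr, dotNl, dotNr, dotZl, dotZr).
  rewrite -!mulmxA -?scalemxAl -?scalemxAr.
  rewrite !(mulmxDl, mulmxDr, mulmxBr, mulmxBl, mulNmx, mulmxN, dotDl, dotDr, dotBl, dotBr, dotNl, dotNr, dotZl, dotZr).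
  rewrite -!mulmxA -/u.
  have e1 : dot v u = dot u v by rewrite dotC.
  have e2 : dot v (L^T *m v) = dot u v by rewrite dot_mulr trmxK.
  have e3 : dot v (L^T *m (S *m u)) = dot u (S *m u) by rewrite dot_mulr trmxK.
  rewrite e1 e2 e3 mulNr.
  have h2 : 2^-1 * (dot u v + dot u v) = dot u v :> R by lra.
  rewrite h2 F1; move: (g k * dot u (S *m u)) F2 => X F2; lra.
- move=> x /=; rewrite /utility /stableP.
  set W := stableW S g (replace_col Mo k x).
  rewrite !colE linearB /= mulmxBl colx -scalemxAl -!mulmxA Ge -!scalemxAr WE.
  rewrite -mulmxBr !dotE /A.
  rewrite /mu colE. set y := L *m x. set mu' := M *m _.
  rewrite !(mulmxDl, mulmxDr, mulmxBr, mulmxBl, mulNmx, mulmxN, dotDl, dotDr, dotBl, dotBr, dotNl, dotNr, dotZl, dotZr).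
  rewrite -!mulmxA -?scalemxAl -?scalemxAr.
  rewrite !(mulmxDl, mulmxDr, mulmxBr, mulmxBl, mulNmx, mulmxN, dotDl, dotDr, dotBl, dotBr, dotNl, dotNr, dotZl, dotZr).
  rewrite -!mulmxA -/y.
  have e1 : dot x y = dot y x by rewrite dotC.
  have e2 : dot x (L^T *m x) = dot y x by rewrite dot_mulr trmxK.
  have e3 : dot x (L^T *m (S *m y)) = dot y (S *m y) by rewrite dot_mulr trmxK.
  have e4 : dot (L^T *m mu') x = dot y mu' by rewrite dotC dot_mulr trmxK.
  have e5 : dot (L^T *m (S *m d)) x = dot y (S *m d) by rewrite dotC dot_mulr trmxK.
  have e6 : dot d (S *m y) = dot y (S *m d) by rewrite dot_mulr ST dotC.
  rewrite e1 e2 e3 e4 e5 e6.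
  have h2 : 2^-1 * (dot y x + dot y x) = dot y x :> R.
    by lra.
  rewrite mulNr h2; ring.
Qed.

End Main.

Theorem mainTheorem4 (R : realFieldType) (n : nat) (Sigma : 'M[R]_n)
    (gamma : 'I_n -> R) (M : 'M[R]_n) (k : 'I_n) (Mo : 'M[R]_n) :
  spd Sigma -> (forall i, 0 < gamma i) ->
  exists (A : 'M[R]_n) (b : 'cV[R]_n) (c : R),
    [/\ A^T = A,
        (forall v : 'cV[R]_n, v != 0 -> (v^T *m A *m v) 0 0 < 0) &
        (forall x : 'cV[R]_n,
           let M' := replace_col Mo k x in
           utility Sigma gamma M k (stableW Sigma gamma M') (stableP Sigma gamma M')
           = (x^T *m A *m x) 0 0 + (b^T *m x) 0 0 + c)].
Proof. by move=> HS Hg; apply: main_sec. Qed.
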